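(* In the FRNS model, suppose the performance vector at the beginning of the last week (week 3) is $W=[2,2,0,0]$. Then for every weight vector $V=[v_1,v_2,v_3,v_4]$ with $v_1\ge v_2\ge v_3\ge v_4>0$, $P^{(1)}_{(1,1,1,1)}(3,W,V)\ge P^{(1)}_{(0,1,1,1)}(3,W,V)$; that is, $a_1$ should try to win its last game.
   Context: FRNS model: four teams $a_1,\dots,a_4$ with weights $V=[v_1,v_2,v_3,v_4]$; $p_{ij}=v_i/(v_i+v_j)$. Regular season: week 1: $a_1$ vs $a_4$, $a_2$ vs $a_3$; week 2: $a_1$ vs $a_3$, $a_2$ vs $a_4$; week 3: $a_1$ vs $a_2$, $a_3$ vs $a_4$. Teams $a_2,a_3,a_4$ always try to win; $a_1$ either tries to win or loses intentionally. If both teams try, $a_i$ beats $a_j$ with probability $p_{ij}$ (games independent); if $a_1$ loses intentionally it loses that game with probability 1. $W=[W_1,\dots,W_4]$ gives numbers of wins before week $m$. After the season teams are seeded by total wins (descending), ties broken by assigning the tied seed positions uniformly at random; knockout tournament: seed 1 vs seed 4, seed 2 vs seed 3, winners meet in the final, each tournament game won by $a_i$ over $a_j$ with probability $p_{ij}$. $P^{(1)}_{\pi}(m,W,V)$ is the probability that $a_1$ wins the tournament when, in week $m$ starting from $W$, $a_1$ tries to win ($\pi=(1,1,1,1)$) or loses intentionally ($\pi=(0,1,1,1)$). *)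

(* Defs.v *)
From HB Require Import structures.
From mathcomp Require Import all_boot all_order all_algebra all_fingroup.
Set Implicit Arguments. Unset Strict Implicit. Unset Printing Implicit Defensive.
Import Order.TTheory GRing.Theory Num.Theory.
Local Open Scope ring_scope.

Section FRNS.
Variable R : realFieldType.

Definition pwin (V : 'I_4 -> R) (i j : 'I_4) : R := V i / (V i + V j).

(* Tournament with seeding s (s k = team holding seed k+1):
   seed1 vs seed4, seed2 vs seed3, winners meet in the final.
   Probability that team i wins the tournament. *)
Definition champ_prob (V : 'I_4 -> R) (s : {perm 'I_4}) (i : 'I_4) : R :=
  let t1 := s (inord 0) in let t2 := s (inord 1) in
  let t3 := s (inord 2) in let t4 := s (inord 3) in
  \sum_(w1 <- [:: t1; t4]) \sum_(w2 <- [:: t2; t3])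
     (pwin V w1 (if w1 == t1 then t4 else t1)
      * pwin V w2 (if w2 == t2 then t3 else t2)
      * ((if w1 == i then pwin V w1 w2 else 0)
         + (if w2 == i then pwin V w2 w1 else 0))).

Definition valid_seeding (Wf : 'I_4 -> nat) (s : {perm 'I_4}) : bool :=
  [forall k : 'I_4, forall l : 'I_4, (k < l)%N ==> (Wf (s l) <= Wf (s k))%N].

(* Ties broken by assigning tied seed positions uniformly at random:
   equivalently, the seeding is uniform among admissible seedings. *)
Definition tourn_prob (Wf : 'I_4 -> nat) (V : 'I_4 -> R) (i : 'I_4) : R :=
  (\sum_(s : {perm 'I_4} | valid_seeding Wf s) champ_prob V s i)
  / (#|[pred s : {perm 'I_4} | valid_seeding Wf s]|)%:R.

Definition a1 : 'I_4 := inord 0.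
Definition a2 : 'I_4 := inord 1.
Definition a3 : 'I_4 := inord 2.
Definition a4 : 'I_4 := inord 3.

(* Week 3 schedule: a1 vs a2, a3 vs a4.
   b12 = true iff a1 beats a2; b34 = true iff a3 beats a4.
   try1 = true : pi = (1,1,1,1) (a1 tries to win);
   try1 = false: pi = (0,1,1,1) (a1 loses intentionally). *)
Definition week3_final (W : 'I_4 -> nat) (b12 b34 : bool) : 'I_4 -> nat :=
  fun i => (W i + (if i == a1 then b12 else if i == a2 then ~~ b12
               else if i == a3 then b34 else if i == a4 then ~~ b34 else false))%N.

Definition game12_prob (try1 : bool) (V : 'I_4 -> R) (b12 : bool) : R :=
  if try1 then (if b12 then pwin V a1 a2 else pwin V a2 a1)
  else (if b12 then 0 else 1).

Definition game34_prob (V : 'I_4 -> R) (b34 : bool) : R :=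
  if b34 then pwin V a3 a4 else pwin V a4 a3.

Definition P1_week3 (try1 : bool) (W : 'I_4 -> nat) (V : 'I_4 -> R) : R :=
  \sum_(b12 : bool) \sum_(b34 : bool)
    game12_prob try1 V b12 * game34_prob V b34
    * tourn_prob (week3_final W b12 b34) V a1.

End FRNS.

Definition vec4 {T} (x0 x1 x2 x3 : T) (i : 'I_4) : T := nth x0 [:: x0; x1; x2; x3] i.

(* Main.v *)
Require Import Defs.
From mathcomp Require Import all_boot all_order all_algebra all_fingroup.
From mathcomp Require Import ring lra zify.
Import Order.TTheory GRing.Theory Num.Theory.
Local Open Scope ring_scope.

Definition o0 : 'I_4 := @Ordinal 4 0 isT.
Definition o1 : 'I_4 := @Ordinal 4 1 isT.
Definition o2 : 'I_4 := @Ordinal 4 2 isT.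
Definition o3 : 'I_4 := @Ordinal 4 3 isT.

Lemma ord4_cases (i : 'I_4) : [\/ i = o0, i = o1, i = o2 | i = o3].
Proof.
case: i => [[|[|[|[|m]]]] Hm]; try by [].
- by apply: Or41; apply/val_inj.
- by apply: Or42; apply/val_inj.
- by apply: Or43; apply/val_inj.
- by apply: Or44; apply/val_inj.
Qed.

Lemma inord0 : inord 0 = o0 :> 'I_4. Proof. by apply/val_inj; rewrite /= inordK. Qed.
Lemma inord1 : inord 1 = o1 :> 'I_4. Proof. by apply/val_inj; rewrite /= inordK. Qed.
Lemma inord2 : inord 2 = o2 :> 'I_4. Proof. by apply/val_inj; rewrite /= inordK. Qed.
Lemma inord3 : inord 3 = o3 :> 'I_4. Proof. by apply/val_inj; rewrite /= inordK. Qed.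

Lemma tourn_unique (R : realFieldType) Wf (V : 'I_4 -> R) i (s0 : {perm 'I_4}) :
  (forall k : 'I_4, Wf (s0 k) = 3 - k)%N ->
  tourn_prob Wf V i = champ_prob V s0 i.
Proof.
move=> H.
have WfE x : Wf x = (3 - (s0^-1)%g x)%N by rewrite -{1}(permKV s0 x) H.
have Winj : injective Wf.
  move=> x y; rewrite !WfE => E; apply: (can_inj (permKV s0)).
  apply/val_inj; rewrite /=; move: E; have := ltn_ord ((s0^-1)%g x); have := ltn_ord ((s0^-1)%g y); lia.
have valE s : valid_seeding Wf s = (s == s0).
  apply/idP/idP.
  - move=> /forallP Hv; apply/eqP/permP => k.
    have Hkl (k' l' : 'I_4) : (k' < l')%N -> (Wf (s l') <= Wf (s k'))%N.
      by move=> lt; have := forallP (Hv k') l'; rewrite lt.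
    have Hd (k' l' : 'I_4) : k' != l' -> Wf (s k') != Wf (s l').
      by move=> ne; apply/contra: ne => /eqP /Winj /perm_inj ->.
    have B x : (Wf x <= 3)%N by rewrite WfE leq_subr.
    have h01 := Hkl o0 o1 isT; have h02 := Hkl o0 o2 isT; have h03 := Hkl o0 o3 isT.
    have h12 := Hkl o1 o2 isT; have h13 := Hkl o1 o3 isT; have h23 := Hkl o2 o3 isT.
    have d01 := Hd o0 o1 isT; have d12 := Hd o1 o2 isT; have d23 := Hd o2 o3 isT.
    have b0 := B (s o0).
    apply: Winj; rewrite H.
    by case: (ord4_cases k) => ->; rewrite /=; lia.
  - move=> /eqP ->; apply/forallP => k; apply/forallP => l; apply/implyP => lt.
    rewrite !H; lia.
rewrite /tourn_prob.
under eq_bigl do rewrite valE.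
rewrite big_pred1_eq.
have -> : #|[pred s : {perm 'I_4} | valid_seeding Wf s]| = 1%N.
  rewrite -[RHS](card1 s0); apply: eq_card => s; by rewrite inE valE.

by rewrite divr1.
Qed.
Definition W0 := vec4 2%N 2%N 0%N 0%N.
Definition sp (b12 b34 : bool) : {perm 'I_4} :=
  ((if b12 then 1 else tperm o0 o1) * (if b34 then 1 else tperm o2 o3))%g.

Lemma sp_ok b12 b34 (k : 'I_4) : week3_final W0 b12 b34 (sp b12 b34 k) = (3 - k)%N.
Proof.
rewrite /week3_final /a1 /a2 /a3 /a4 inord0 inord1 inord2 inord3 /sp.
by case: b12; case: b34; case: (ord4_cases k) => ->; rewrite ?permM ?perm1 ?permE.
Qed.

Lemma P1E (R : realFieldType) try1 (V : 'I_4 -> R) :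
  P1_week3 try1 W0 V = \sum_(b12 : bool) \sum_(b34 : bool)
    game12_prob try1 V b12 * game34_prob V b34 * champ_prob V (sp b12 b34) a1.
Proof.
apply: eq_bigr => b12 _; apply: eq_bigr => b34 _.
by rewrite (@tourn_unique _ _ _ _ _ (sp_ok b12 b34)).
Qed.

Theorem theorem3 (R : realFieldType) (v1 v2 v3 v4 : R) :
  v2 <= v1 -> v3 <= v2 -> v4 <= v3 -> 0 < v4 ->
  P1_week3 false (vec4 2%N 2%N 0%N 0%N) (vec4 v1 v2 v3 v4)
  <= P1_week3 true (vec4 2%N 2%N 0%N 0%N) (vec4 v1 v2 v3 v4).
Proof.
move=> h21 h32 h43 h4.
rewrite !P1E !big_bool /=.
rewrite /champ_prob /game12_prob /game34_prob /a1 /a2 /a3 /a4 !inord0 !inord1 !inord2 !inord3 /sp.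
rewrite !big_cons !big_nil /=.
rewrite ?permM ?perm1 ?permE /=.
rewrite /pwin /vec4 /=.
have p1 : 0 < v1 by lra. have p2 : 0 < v2 by lra. have p3 : 0 < v3 by lra.
have n12 : v1 + v2 != 0 by rewrite gt_eqF // ltr_wpDr // ltW.
have n13 : v1 + v3 != 0 by rewrite gt_eqF // ltr_wpDr // ltW.
have n14 : v1 + v4 != 0 by rewrite gt_eqF // ltr_wpDr // ltW.
have n23 : v2 + v3 != 0 by rewrite gt_eqF // ltr_wpDr // ltW.
have n24 : v2 + v4 != 0 by rewrite gt_eqF // ltr_wpDr // ltW.
have n34 : v3 + v4 != 0 by rewrite gt_eqF // ltr_wpDr // ltW.
have n21 : v2 + v1 != 0 by rewrite addrC.
have n31 : v3 + v1 != 0 by rewrite addrC.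
have n41 : v4 + v1 != 0 by rewrite addrC.
have n32 : v3 + v2 != 0 by rewrite addrC.
have n42 : v4 + v2 != 0 by rewrite addrC.
have n43 : v4 + v3 != 0 by rewrite addrC.
rewrite -subr_ge0.
set D := (v1 + v2) ^+ 2 * (v3 + v4) * (v1 + v3) * (v1 + v4) * (v2 + v3) * (v2 + v4).
have nD : D != 0 by rewrite /D !mulf_neq0 // expf_neq0.
match goal with |- is_true (0 <= ?e) => have -> : e = 2 * v1 ^+ 3 * v2 ^+ 2 * (v3 - v4) ^+ 2 / D end.
  rewrite /D; field.
  by rewrite ?n12 ?n13 ?n14 ?n23 ?n24 ?n34 ?n21 ?n31 ?n41 ?n32 ?n42 ?n43.
have Dp : 0 < D by rewrite /D !mulr_gt0 // ?exprn_gt0 // ?addr_gt0.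
apply: mulr_ge0; last by rewrite invr_ge0 ltW.
rewrite !mulr_ge0 // ?sqr_ge0 //; lra.
Qed.
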